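(* Let $n\geq1$ and $\Delta:=\rho_n^{n+1}\in M_n$. Then: (1) $\rho_1(\rho_n\rho_1)^{n-1}=\rho_n^{\,n}$, and hence $\Delta=(\rho_1\rho_n)^n=(\rho_n\rho_1)^n$. (2) For $1\leq i\leq n$, setting $a_i:=\rho_n^{\,i}(\rho_1\rho_n)^{n-i}$, one has $\rho_ia_i=a_i\rho_i=\Delta$; in particular each generator $\rho_i$ is both a left- and a right-divisor of $\Delta$, and $\Delta$ is central in $M_n$. (3) For all $a,b\in M_n$, if $ab=\Delta$ then $ba=\Delta$.
   Context: $M_n$ denotes the monoid with generators $\rho_1,\dots,\rho_n$ and relations $\rho_1\rho_n\rho_i=\rho_{i+1}\rho_n$ for $1\leq i\leq n-1$. *)

(* Defs.v *)
From mathcomp Require Import all_boot.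
From Stdlib Require Import Relations.
Set Implicit Arguments. Unset Strict Implicit. Unset Printing Implicit Defensive.

(* The monoid M_n = < rho_1..rho_n | rho_1 rho_n rho_i = rho_{i+1} rho_n, 1<=i<=n-1 >.
   Elements are represented by words: a word is a [seq nat], the letter [k]
   standing for the generator rho_k (1 <= k <= n). The empty word is 1,
   concatenation is the product. *)

Definition valid_word (n : nat) (w : seq nat) : bool :=
  all (fun k => (0 < k) && (k <= n)) w.

Inductive Mstep (n : nat) : seq nat -> seq nat -> Prop :=
| Mstep_rel (u v : seq nat) (i : nat) :
    1 <= i -> i <= n - 1 ->
    Mstep n (u ++ [:: 1; n; i] ++ v) (u ++ [:: i.+1; n] ++ v).

Definition Meq (n : nat) : seq nat -> seq nat -> Prop :=
  clos_refl_sym_trans (seq nat) (Mstep n).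

Definition wpow (w : seq nat) (k : nat) : seq nat := flatten (nseq k w).

(* Main.v *)
Require Import Defs.
From mathcomp Require Import all_boot.
From Stdlib Require Import Relations.
From mathcomp Require Import zify.
Set Implicit Arguments. Unset Strict Implicit.


Section M.
Variable n : nat.

Lemma Meq_refl a : Meq n a a. Proof. exact: rst_refl. Qed.
Lemma Meq_sym a b : Meq n a b -> Meq n b a. Proof. exact: rst_sym. Qed.
Lemma Meq_trans a b c : Meq n a b -> Meq n b c -> Meq n a c.
Proof. exact: rst_trans. Qed.

Lemma Mstep_ctx c d a b : Mstep n a b -> Mstep n (c ++ a ++ d) (c ++ b ++ d).
Proof.
case=> u v i h1 h2.
have := Mstep_rel (c ++ u) (v ++ d) h1 h2.
by rewrite -!catA /=.
Qed.

Lemma Meq_ctx c d a b : Meq n a b -> Meq n (c ++ a ++ d) (c ++ b ++ d).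
Proof.
elim=> [x y H|x|x y _ IH|x y z _ IH1 _ IH2].
- by apply: rst_step; apply: Mstep_ctx.
- exact: Meq_refl.
- exact: Meq_sym.
- exact: Meq_trans IH2.
Qed.

Lemma Meq_cons k a b : Meq n a b -> Meq n (k :: a) (k :: b).
Proof. by move=> H; have := Meq_ctx [:: k] [::] H; rewrite !cats0. Qed.

Lemma Meq_catl c a b : Meq n a b -> Meq n (c ++ a) (c ++ b).
Proof. by move=> H; have := Meq_ctx c [::] H; rewrite !cats0. Qed.

Lemma Meq_catr d a b : Meq n a b -> Meq n (a ++ d) (b ++ d).
Proof. by move=> H; have := Meq_ctx [::] d H. Qed.

Lemma wpowSr (w : seq nat) m : wpow w m.+1 = wpow w m ++ w.
Proof.
by rewrite /wpow -addn1 nseqD flatten_cat /= cats0.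
Qed.

Lemma wpowD (w : seq nat) a b : wpow w (a + b) = wpow w a ++ wpow w b.
Proof. by rewrite /wpow nseqD flatten_cat. Qed.

Lemma wpow_swap a b m : [:: a] ++ wpow [:: b; a] m = wpow [:: a; b] m ++ [:: a].
Proof.
elim: m => [//|m IH].
rewrite /wpow /= -/(wpow [:: b; a] m) -/(wpow [:: a; b] m).
by rewrite -IH.
Qed.

Lemma G m : forall i c q, 1 <= i -> i + m <= n ->
  Meq n (wpow [:: 1; n] m ++ i :: nseq c n ++ q) ((i + m) :: nseq (c + m) n ++ q).
Proof.
elim: m => [|m IH] i c q hi him.
  by rewrite !addn0; exact: Meq_refl.
have e : wpow [:: 1; n] m.+1 = [:: 1; n] ++ wpow [:: 1; n] m by [].
rewrite e -catA.
have him' : i + m <= n by lia.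
apply: Meq_trans (Meq_catl [:: 1; n] (IH i c q hi him')) _.
apply: rst_step.
have h2 : i + m <= n - 1 by lia.
have h1 : 1 <= i + m by lia.
have := Mstep_rel [::] (nseq (c + m) n ++ q) h1 h2.
by rewrite /= !addnS.
Qed.

Lemma ID j k q : 1 <= j -> 1 <= k -> j + k <= n ->
  Meq n (j :: nseq j n ++ k :: q) ((j + k) :: nseq j n ++ q).
Proof.
case: j => [//|j] _ hk hjk.
have H1 := @G j 1 1 (k :: q) (leqnn 1) ltac:(lia).
have H2 := @G j.+1 k 0 q hk ltac:(lia).
rewrite wpowSr -catA /= in H2.
rewrite add1n /= in H1.
rewrite addnC in H2.
by apply: Meq_trans (Meq_sym H1) H2.
Qed.


Definition wt (w : seq nat) : nat := sumn (map (fun k => maxn k 1) w).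

Lemma wt_cat a b : wt (a ++ b) = wt a + wt b.
Proof. by rewrite /wt map_cat sumn_cat. Qed.

Lemma wt_cons k a : wt (k :: a) = maxn k 1 + wt a.
Proof. by []. Qed.

Lemma Mstep_wt a b : Mstep n a b -> wt a = wt b.
Proof.
case=> u v i h1 h2; rewrite !wt_cat !wt_cons /wt /=.
have -> : maxn i 1 = i by lia.
have -> : maxn i.+1 1 = i.+1 by lia.
lia.
Qed.

Lemma Meq_wt a b : Meq n a b -> wt a = wt b.
Proof.
elim=> [x y H|x|x y _ IH|x y z _ IH1 _ IH2] //.
- exact: Mstep_wt.
- by rewrite IH1.
Qed.

Definition f (x y : nat) : seq nat :=
  nseq (minn x y) n ++ (if x < y then [:: y - x] else [::]).

Lemma fE_lt x y : x < y -> f x y = nseq x n ++ [:: y - x].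
Proof. by move=> h; rewrite /f (minn_idPl (ltnW h)) h. Qed.

Lemma fE_gt x y : y < x -> f x y = nseq y n.
Proof. by move=> h; rewrite /f (minn_idPr (ltnW h)) ltnNge (ltnW h) cats0. Qed.

Definition Rel x u y v : Prop :=
  (x = y -> Meq n u v) /\
  (x <> y -> [/\ 0 < x <= n, 0 < y <= n &
      exists r, Meq n u (f x y ++ r) /\ Meq n v (f y x ++ r)]).

Lemma Rel_sym x u y v : Rel x u y v -> Rel y v x u.
Proof.
case=> H1 H2; split.
  by move=> e; apply: Meq_sym; apply: H1.
move=> ne; have [a b [r [r1 r2]]] := H2 (nesym ne).
by split=> //; exists r.
Qed.

Section Cancel.
Variable W : nat.
Hypothesis IH : forall x u y v, wt (x :: u) <= W -> Meq n (x :: u) (y :: v) -> Rel x u y v.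

Lemma cancel_word c p q : wt (c ++ p) <= W -> Meq n (c ++ p) (c ++ q) -> Meq n p q.
Proof.
elim: c => [//|a c IHc] hw H.
apply: IHc; first by move: hw; rewrite /= wt_cons; lia.
by case: (IH hw H) => H1 _; apply: H1.
Qed.

Lemma combine_lt x y z u v s p q : y <> x -> y <> z -> x < z ->
  0 < x <= n -> 0 < y <= n -> 0 < z <= n -> wt v <= W ->
  Meq n u (f x y ++ p) -> Meq n v (f y x ++ p) ->
  Meq n v (f y z ++ q) -> Meq n s (f z y ++ q) ->
  exists r, Meq n u (f x z ++ r) /\ Meq n s (f z x ++ r).
Proof.
move=> nyx nyz hxz hx hy hz hw Hu Hv1 Hv2 Hs.
have Hpq : Meq n (f y x ++ p) (f y z ++ q) := Meq_trans (Meq_sym Hv1) Hv2.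
have hwp : wt (f y x ++ p) <= W by rewrite -(Meq_wt Hv1).
rewrite (fE_lt hxz) (fE_gt hxz).
have [hyx|hxy] := ltnP y x.
-
  have hyz : y < z by lia.
  rewrite (fE_lt hyx) (fE_lt hyz) -!catA in Hpq hwp.
  have H := cancel_word hwp Hpq.
  have hw2 : wt ((x - y) :: p) <= W by move: hwp; rewrite wt_cat /=; lia.
  have [_ H2] := IH hw2 H.
  have ne : x - y <> z - y by lia.
  have [_ _ [r [Hp Hq]]] := H2 ne.
  have l1 : x - y < z - y by lia.
  rewrite (fE_lt l1) (fE_gt l1) in Hp Hq.
  exists r; split.
  + rewrite (fE_gt hyx) in Hu.
    apply: Meq_trans Hu _.
    have -> : nseq x n = nseq y n ++ nseq (x - y) n by rewrite -nseqD; congr nseq; lia.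
    have e2 : z - y - (x - y) = z - x by lia.
    rewrite e2 in Hp; rewrite -!catA; apply: Meq_catl; by rewrite catA.
  + rewrite (fE_gt hyz) in Hs.
    apply: Meq_trans Hs _.
    have -> : nseq x n = nseq y n ++ nseq (x - y) n by rewrite -nseqD; congr nseq; lia.
    by rewrite -catA; apply: Meq_catl.
- have hxy' : x < y by lia.
  rewrite (fE_gt hxy') in Hpq hwp.
  rewrite (fE_lt hxy') in Hu.
  have [hyz|hzy] := ltnP y z.
  +
    rewrite (fE_lt hyz) in Hpq.
    have e : nseq y n = nseq x n ++ nseq (y - x) n by rewrite -nseqD; congr nseq; lia.
    rewrite e -!catA in Hpq.
    have Hp := cancel_word hwp Hpq.
    exists (nseq (y - x) n ++ q); split.
    * apply: Meq_trans Hu _.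
      rewrite -!catA; apply: Meq_catl.
      apply: Meq_trans (Meq_cons (y - x) Hp) _.
      have -> : z - x = (y - x) + (z - y) by lia.
      by apply: ID; lia.
    * rewrite (fE_gt hyz) e -catA in Hs; exact: Hs.
  +
    have hzy' : z < y by lia.
    rewrite (fE_gt hzy') in Hpq.
    have e : nseq z n = nseq x n ++ nseq (z - x) n by rewrite -nseqD; congr nseq; lia.
    rewrite e -!catA in Hpq.
    have Hp := cancel_word hwp Hpq.
    exists (nseq (z - x) n ++ (y - z) :: q); split.
    * apply: Meq_trans Hu _.
      rewrite -!catA; apply: Meq_catl.
      apply: Meq_trans (Meq_cons (y - x) Hp) _.
      apply: Meq_sym.
      have -> : y - x = (z - x) + (y - z) by lia.
      by apply: ID; lia.
    * rewrite (fE_lt hzy') e -!catA in Hs; exact: Hs.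
Qed.


Lemma combine x y z u v s p q : y <> x -> y <> z -> x <> z ->
  0 < x <= n -> 0 < y <= n -> 0 < z <= n -> wt v <= W ->
  Meq n u (f x y ++ p) -> Meq n v (f y x ++ p) ->
  Meq n v (f y z ++ q) -> Meq n s (f z y ++ q) ->
  exists r, Meq n u (f x z ++ r) /\ Meq n s (f z x ++ r).
Proof.
move=> nyx nyz nxz hx hy hz hw Hu Hv1 Hv2 Hs.
have [hlt|hgt] := ltnP x z.
  exact: (combine_lt nyx nyz hlt hx hy hz hw Hu Hv1 Hv2 Hs).
have hzx : z < x by lia.
have [r [H1 H2]] := combine_lt nyz nyx hzx hz hy hx hw Hs Hv2 Hv1 Hu.
by exists r.
Qed.

Lemma Rel_trans x u y v z s : wt v <= W ->
  Rel x u y v -> Rel y v z s -> Rel x u z s.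
Proof.
move=> hw [A1 A2] [B1 B2].
have [exy|/eqP nxy] := eqVneq x y.
  subst y; have Huv := A1 erefl.
  split.
    by move=> e; exact: Meq_trans Huv (B1 e).
  move=> nxz; have [h1 h2 [r [r1 r2]]] := B2 nxz.
  by split=> //; exists r; split=> //; exact: Meq_trans Huv r1.
have [eyz|/eqP nyz] := eqVneq y z.
  subst z; have Hvs := B1 erefl.
  split; first by move=> e.
  move=> _; have [h1 h2 [r [r1 r2]]] := A2 nxy.
  by split=> //; exists r; split=> //; exact: Meq_trans (Meq_sym Hvs) r2.
have [h1 h2 [p [p1 p2]]] := A2 nxy.
have [h3 h4 [q [q1 q2]]] := B2 nyz.
have [exz|/eqP nxz] := eqVneq x z.
  subst z; split=> // _.
  have hwp : wt (f y x ++ p) <= W by rewrite -(Meq_wt p2).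
  have Hpq : Meq n p q.
    by apply: (cancel_word hwp); exact: Meq_trans (Meq_sym p2) q1.
  apply: Meq_trans p1 _; apply: Meq_trans _ (Meq_sym q2).
  exact: Meq_catl.
split=> // _; split=> //.
apply: (@combine x y z u v s p q) => //; by apply: nesym.
Qed.

Lemma Rel_step a b : Mstep n a b -> forall x u y v, a = x :: u -> b = y :: v -> Rel x u y v.
Proof.
case=> [[|k w] v0 i h1 h2] x u y v /= [<- <-] [<- <-].
  split; first by move=> e; lia.
  move=> _; split; [lia|lia|].
  have hl : 1 < i.+1 by lia.
  exists v0; rewrite (fE_lt hl) (fE_gt hl).
  rewrite subn1 /=; split; exact: Meq_refl.
split=> // _.
apply: rst_step; exact: Mstep_rel.
Qed.

End Cancel.


Lemma cancel_main W : forall x u y v, wt (x :: u) <= W ->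
  Meq n (x :: u) (y :: v) -> Rel x u y v.
Proof.
elim: W => [|W IHW].
  by move=> x u y v; rewrite wt_cons; lia.
suff H : forall a b, Meq n a b -> wt a <= W.+1 ->
    forall x u y v, a = x :: u -> b = y :: v -> Rel x u y v.
  by move=> x u y v hw hm; exact: (H _ _ hm hw x u y v erefl erefl).
move=> a b; elim=> [a' b' Hs|a'|a' b' Hab IH|a' b' c' Hab IH1 Hbc IH2] hw x u y v ea eb.
- exact: (Rel_step Hs ea eb).
- subst; case: eb => -> ->; split=> // _; exact: Meq_refl.
- apply: Rel_sym; apply: (IH _ y v x u eb ea).
  by rewrite (Meq_wt Hab).
- case eb' : b' => [|y' v'].
    have := Meq_wt Hab; rewrite ea eb' wt_cons /wt /=; lia.
  have hw' : wt b' <= W.+1 by rewrite -(Meq_wt Hab).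
  have R1 := IH1 hw x u y' v' ea eb'.
  have R2 := IH2 hw' y' v' y v eb' eb.
  apply: (Rel_trans IHW _ R1 R2).
  by move: hw'; rewrite eb' wt_cons; lia.
Qed.

Lemma cancel_letter x u v : Meq n (x :: u) (x :: v) -> Meq n u v.
Proof.
move=> H; case: (cancel_main (leqnn (wt (x :: u))) H) => H1 _; exact: H1.
Qed.


Hypothesis hn : 1 <= n.

Lemma part1 : Meq n ([:: 1] ++ wpow [:: n; 1] n.-1) (nseq n n).
Proof.
rewrite wpow_swap.
have := @G n.-1 1 0 [::] (leqnn 1) ltac:(lia).
rewrite add1n add0n prednK // cats0.
have -> : nseq n n = n :: nseq n.-1 n by rewrite -{1}(prednK hn).
move=> H; rewrite cats0 in H; exact: H.
Qed.

Lemma part2a : Meq n (nseq n.+1 n) (wpow [:: 1; n] n).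
Proof.
have e : wpow [:: 1; n] n = wpow [:: 1; n] n.-1 ++ [:: 1; n] by rewrite -wpowSr prednK.
rewrite e; apply: Meq_sym.
have := @G n.-1 1 1 [::] (leqnn 1) ltac:(lia).
rewrite add1n prednK // => H; rewrite cats0 in H.
have -> : nseq n.+1 n = n :: nseq n n by []. 
move: H; rewrite [nseq n n ++ _]cats0 => H; exact: H.
Qed.

Lemma part2b : Meq n (nseq n.+1 n) (wpow [:: n; 1] n).
Proof.
have e : wpow [:: n; 1] n = n :: ([:: 1] ++ wpow [:: n; 1] n.-1).
  have e2 : wpow [:: n; 1] n.-1.+1 = n :: ([:: 1] ++ wpow [:: n; 1] n.-1) by [].
  by rewrite prednK in e2.
rewrite e; apply: Meq_cons; apply: Meq_sym; exact: part1.
Qed.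

Lemma part3a i : 1 <= i -> i <= n ->
  Meq n ([:: i] ++ (nseq i n ++ wpow [:: 1; n] (n - i))) (nseq n.+1 n).
Proof.
move=> h1 h2.
have := @G i.-1 1 1 (wpow [:: 1; n] (n - i)) (leqnn 1) ltac:(lia).
rewrite add1n prednK // => H.
have eL : wpow [:: 1; n] i.-1 ++ 1 :: nseq 1 n ++ wpow [:: 1; n] (n - i) = wpow [:: 1; n] n.
  have -> : wpow [:: 1; n] n = wpow [:: 1; n] (i.-1.+1 + (n - i)) by rewrite prednK // subnKC.
  by rewrite wpowD wpowSr -catA.
rewrite eL in H.
exact: Meq_trans (Meq_sym H) (Meq_sym part2a).
Qed.

Lemma part3b i : 1 <= i -> i <= n ->
  Meq n ((nseq i n ++ wpow [:: 1; n] (n - i)) ++ [:: i]) (nseq n.+1 n).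
Proof.
move=> h1 h2.
have := @G (n - i) i 0 [::] h1 ltac:(lia).
rewrite add0n subnKC // cats0 -catA => H.
have -> : nseq n.+1 n = nseq i n ++ n :: nseq (n - i) n.
  have := @nseqD _ i (n - i).+1 n; rewrite addnS subnKC // => ->; by [].
apply: Meq_catl; move: H; rewrite [nseq (n - i) n ++ _]cats0 => H; exact: H.
Qed.

Lemma cent_letter k : 0 < k <= n -> Meq n (nseq n.+1 n ++ [:: k]) (k :: nseq n.+1 n).
Proof.
move=> /andP [h1 h2].
apply: Meq_trans (Meq_catr [:: k] (Meq_sym (part3a h1 h2))) _.
rewrite /= -catA.
apply: Meq_cons.
have := part3b h1 h2; rewrite -catA => H; exact: H.
Qed.

Lemma cent w : valid_word n w -> Meq n (nseq n.+1 n ++ w) (w ++ nseq n.+1 n).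
Proof.
elim: w => [|k w IH].
  move=> _; rewrite cats0; exact: Meq_refl.
move=> /andP [hk hw].
have -> : nseq n.+1 n ++ k :: w = (nseq n.+1 n ++ [:: k]) ++ w by rewrite -catA.
apply: Meq_trans (Meq_catr w (cent_letter hk)) _.
rewrite /=; apply: Meq_cons; exact: IH.
Qed.

Lemma part5 a : valid_word n a -> forall b,
  Meq n (a ++ b) (nseq n.+1 n) -> Meq n (b ++ a) (nseq n.+1 n).
Proof.
elim: a => [|x a IH] /=; first by move=> _ b; rewrite cats0.
move=> /andP [/andP [h1 h2] ha] b H.
have H3 := part3a h1 h2.
have Hc : Meq n (a ++ b) (nseq x n ++ wpow [:: 1; n] (n - x)).
  apply: (@cancel_letter x); exact: Meq_trans H (Meq_sym H3).
have := IH ha (b ++ [:: x]).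
rewrite -catA /= catA => IH'.
apply: IH'.
apply: Meq_trans (Meq_catr [:: x] Hc) _.
exact: part3b.
Qed.

End M.

Theorem proposition4p14 (n : nat) (hn : 1 <= n) :
  let Delta := nseq n.+1 n in
  [/\ Meq n ([:: 1] ++ wpow [:: n; 1] n.-1) (nseq n n),
      Meq n Delta (wpow [:: 1; n] n) /\ Meq n Delta (wpow [:: n; 1] n),
      (forall i, 1 <= i -> i <= n ->
         let a := nseq i n ++ wpow [:: 1; n] (n - i) in
         Meq n ([:: i] ++ a) Delta /\ Meq n (a ++ [:: i]) Delta),
      (forall w, valid_word n w -> Meq n (Delta ++ w) (w ++ Delta)) &
      (forall a b, valid_word n a -> valid_word n b ->
         Meq n (a ++ b) Delta -> Meq n (b ++ a) Delta)].
Proof.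
move=> Delta; split.
- exact: part1.
- split; [exact: part2a | exact: part2b].
- move=> i h1 h2 a; split; [exact: part3a | exact: part3b].
- move=> w hw; exact: cent.
- move=> a b ha _ H; exact: part5.
Qed.
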